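(* Let $S$ be a completely simple semigroup which is the union $S=S_1\cup S_2$ of two left simple subsemigroups $S_1,S_2$. Then either $S$ is left simple, or the union is disjoint and $S_1$ and $S_2$ are the minimal left ideals of $S$.
   Context: A semigroup is completely simple if it has no zero element, has no proper two-sided ideal, and contains an idempotent that is minimal for the order $p\le q\iff p=pq=qp$ on idempotents. A semigroup is left simple if it has no proper left ideal (a left ideal of $S$ being a non-empty $I\subset S$ with $SI\subset I$). *)

(* Defs.v *)
Definition associative_op {T : Type} (op : T -> T -> T) : Prop :=
  forall x y z, op x (op y z) = op (op x y) z.

Definition same_set {T : Type} (A B : T -> Prop) : Prop :=
  forall x, A x <-> B x.

Definition subset {T : Type} (A B : T -> Prop) : Prop :=
  forall x, A x -> B x.

Definition subsemigroup {T : Type} (op : T -> T -> T) (A : T -> Prop) : Prop :=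
  (exists a, A a) /\ forall x y, A x -> A y -> A (op x y).

Definition left_ideal_in {T : Type} (op : T -> T -> T) (A I : T -> Prop) : Prop :=
  (exists i, I i) /\ subset I A /\ forall a i, A a -> I i -> I (op a i).

Definition ideal_in {T : Type} (op : T -> T -> T) (A I : T -> Prop) : Prop :=
  (exists i, I i) /\ subset I A /\
  (forall a i, A a -> I i -> I (op a i)) /\
  (forall a i, A a -> I i -> I (op i a)).

Definition left_simple_in {T : Type} (op : T -> T -> T) (A : T -> Prop) : Prop :=
  forall I, left_ideal_in op A I -> same_set I A.

Definition setT {T : Type} : T -> Prop := fun _ => True.

Definition is_zero {T : Type} (op : T -> T -> T) (z : T) : Prop :=
  forall x, op z x = z /\ op x z = z.

Definition idempotent {T : Type} (op : T -> T -> T) (e : T) : Prop :=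
  op e e = e.

Definition idem_le {T : Type} (op : T -> T -> T) (p q : T) : Prop :=
  p = op p q /\ p = op q p.

Definition completely_simple {T : Type} (op : T -> T -> T) : Prop :=
  (~ exists z, is_zero op z) /\
  (forall I, ideal_in op setT I -> same_set I setT) /\
  (exists e, idempotent op e /\
     forall f, idempotent op f -> idem_le op f e -> f = e).

Definition minimal_left_ideal {T : Type} (op : T -> T -> T) (L : T -> Prop) : Prop :=
  left_ideal_in op setT L /\
  forall J, left_ideal_in op setT J -> subset J L -> same_set J L.

(* Main.v *)
Require Import Defs.
From Stdlib Require Import Classical.

Section S.
Variable T : Type.
Variable op : T -> T -> T.
Hypothesis As : associative_op op.

Lemma prim_lemma (e : T) : idempotent op e ->
  (forall f, idempotent op f -> idem_le op f e -> f = e) ->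
  (forall I, ideal_in op setT I -> same_set I setT) ->
  forall L : T -> Prop, (exists a, L a) -> (forall a, L a -> exists u, a = op u e) ->
  (forall y a, L a -> L (op y a)) -> L e.
Proof.
  intros He Hp Hs L [a La] Hsub Hcl.
  destruct (Hsub a La) as [u Hu].
  assert (Hae : op a e = a) by (rewrite Hu, <- As, He; reflexivity).
  pose (Id := fun z => exists x y, z = op x (op a y)).
  assert (HI : ideal_in op setT Id).
  { split; [exists (op a (op a a)); exists a, a; reflexivity|].
    split; [intros z _; exact I|].
    split.
    - intros w z _ [x [y Hz]]; exists (op w x), y; subst z; rewrite As; reflexivity.
    - intros w z _ [x [y Hz]]; exists x, (op y w); subst z; rewrite !As; reflexivity. }
  destruct (proj2 (Hs Id HI e) Logic.I) as [x [y Hxy]].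
  set (x' := op e x). set (y' := op y e).
  assert (E : e = op x' (op a y')).
  { unfold x', y'. transitivity (op e (op e e)); [unfold idempotent in He; rewrite !He; reflexivity|].
    transitivity (op e (op (op x (op a y)) e)); [rewrite <- Hxy; reflexivity|].
    rewrite !As. reflexivity. }
  assert (Hy' : op y' e = y') by (unfold y'; rewrite <- As, He; reflexivity).
  set (f := op e (op y' (op x' a))).
  assert (Lf : L f) by (unfold f; apply Hcl; apply Hcl; apply Hcl; exact La).
  assert (Hf : f = e).
  { apply Hp.
    - unfold idempotent, f.
      assert (op (op e (op y' (op x' a))) (op e (op y' (op x' a)))
              = op e (op y' (op (op x' (op a y')) (op x' a)))).
      { assert (Hae' : forall z, op (op z a) e = op z a) by (intro z; rewrite <- As, Hae; reflexivity).
        rewrite !As. rewrite Hae'. reflexivity. }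
      rewrite H. rewrite <- E. rewrite (As y' e), Hy'. reflexivity.
    - split.
      + unfold f. rewrite <- !As. rewrite Hae. reflexivity.
      + unfold f. rewrite (As e e), He. reflexivity. }
  rewrite <- Hf; exact Lf.
Qed.

Lemma key_lemma (e : T) : idempotent op e ->
  (forall f, idempotent op f -> idem_le op f e -> f = e) ->
  (forall I, ideal_in op setT I -> same_set I setT) ->
  forall s c, exists t, op e c = op t (op (op s e) c).
Proof.
  intros He Hp Hs s c.
  set (b := op (op s e) c).
  pose (L := fun x => (exists u, x = op u e) /\ exists t, op x c = op t b).
  assert (HL : L e).
  { apply (prim_lemma e He Hp Hs L).
    - exists (op (op e s) e). split; [exists (op e s); reflexivity|].
      exists e. unfold b. rewrite !As. reflexivity.
    - intros a [H _]; exact H.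
    - intros y x [[u Hu] [t Ht]]. split.
      + exists (op y u). rewrite Hu, As. reflexivity.
      + exists (op y t). rewrite <- As, Ht, As. reflexivity. }
  destruct HL as [_ [t Ht]]. exists t. exact Ht.
Qed.

Lemma structure : completely_simple op ->
  (forall a, exists t, a = op t a) /\ (forall a t, exists u, a = op u (op t a)).
Proof.
  intros [_ [Hs [e [He Hp]]]].
  assert (HM : forall a, exists s c, a = op (op s e) c).
  { intro a.
    pose (M := fun z => exists s c, z = op (op s e) c).
    assert (HI : ideal_in op setT M).
    { split; [exists (op (op e e) e); exists e, e; reflexivity|].
      split; [intros z _; exact Logic.I|].
      split.
      - intros w z _ [s0 [c Hz]]; exists (op w s0), c; subst z; rewrite !As; reflexivity.
      - intros w z _ [s0 [c Hz]]; exists s0, (op c w); subst z; rewrite !As; reflexivity. }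
    exact (proj2 (Hs M HI a) Logic.I). }
  split.
  - intro a. destruct (HM a) as [s [c Ha]].
    destruct (key_lemma e He Hp Hs s c) as [t Ht].
    exists (op s t). transitivity (op s (op e c)); [rewrite As; exact Ha|].
    rewrite Ht, <- Ha, As. reflexivity.
  - intros a t0. destruct (HM a) as [s [c Ha]].
    destruct (key_lemma e He Hp Hs (op t0 s) c) as [v Hv].
    exists (op s v).
    assert (E : op t0 a = op (op (op t0 s) e) c) by (rewrite Ha, !As; reflexivity).
    rewrite <- E in Hv. transitivity (op s (op e c)); [rewrite As; exact Ha|].
    rewrite Hv, As. reflexivity.
Qed.

Lemma cover (X : T -> Prop) : subsemigroup op X -> left_simple_in op X ->
  forall a, X a -> forall x, X x -> exists t, x = op t a.
Proof.
  intros [_ Xc] LS a Xa x Xx.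
  pose (I := fun z => exists t, X t /\ z = op t a).
  assert (HI : left_ideal_in op X I).
  { split; [exists (op a a); exists a; split; [exact Xa | reflexivity]|].
    split.
    - intros z [t [Xt ->]]. apply Xc; assumption.
    - intros w z Xw [t [Xt ->]]. exists (op w t). split; [apply Xc; assumption| rewrite As; reflexivity]. }
  destruct (proj2 (LS I HI x) Xx) as [t [_ Ht]]. exists t; exact Ht.
Qed.

Section M.
Hypothesis A1 : forall a, exists t, a = op t a.
Hypothesis A2 : forall a t, exists u, a = op u (op t a).

Lemma minimal_of (X : T -> Prop) (c : T) :
  (forall z, X z <-> exists t, z = op t c) -> minimal_left_ideal op X.
Proof.
  intros HX. split.
  - split; [exists c; apply HX; apply A1|].
    split; [intros z _; exact Logic.I|].
    intros y i _ Xi. apply HX. destruct (proj1 (HX i) Xi) as [t ->].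
    exists (op y t). rewrite As; reflexivity.
  - intros J [[j Jj] [_ Jcl]] JX z. split; [apply JX|].
    intro Xz. destruct (proj1 (HX j) (JX j Jj)) as [v Hv].
    destruct (A2 c v) as [u Hu]. rewrite <- Hv in Hu.
    destruct (proj1 (HX z) Xz) as [t ->].
    rewrite Hu, As. apply Jcl; [exact Logic.I | exact Jj].
Qed.

Lemma minimal_eq (X L : T -> Prop) (c l : T) :
  (forall z, X z <-> exists t, z = op t c) -> minimal_left_ideal op L ->
  L l -> X l -> same_set L X.
Proof.
  intros HX [[_ [_ Lcl]] Lmin] Ll Xl.
  destruct (minimal_of X c HX) as [HXl _].
  assert (sub : subset X L).
  { intros z Xz. destruct (proj1 (HX l) Xl) as [v Hv].
    destruct (A2 c v) as [u Hu]. rewrite <- Hv in Hu.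
    destruct (proj1 (HX z) Xz) as [t ->].
    rewrite Hu, As. apply Lcl; [exact Logic.I | exact Ll]. }
  intro z. split; [| apply sub].
  intro Lz. apply (Lmin X HXl sub z). exact Lz.
Qed.
End M.

End S.

Theorem lemma2p10 (T : Type) (op : T -> T -> T) (S1 S2 : T -> Prop) :
  associative_op op ->
  completely_simple op ->
  (forall x, S1 x \/ S2 x) ->
  subsemigroup op S1 -> left_simple_in op S1 ->
  subsemigroup op S2 -> left_simple_in op S2 ->
  left_simple_in op setT \/
  ((forall x, ~ (S1 x /\ S2 x)) /\
   minimal_left_ideal op S1 /\ minimal_left_ideal op S2 /\
   (forall L, minimal_left_ideal op L -> same_set L S1 \/ same_set L S2)).
Proof.
  intros As CS Hcov HS1 LS1 HS2 LS2.
  destruct HS1 as [[a S1a] S1c]. destruct HS2 as [[b S2b] S2c].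
  destruct (structure T op As CS) as [A1 A2].
  assert (C1 : forall x, S1 x -> exists t, x = op t a)
    by (apply (cover T op As); [split; [exists a; exact S1a| exact S1c] | exact LS1 | exact S1a]).
  assert (C2 : forall x, S2 x -> exists t, x = op t b)
    by (apply (cover T op As); [split; [exists b; exact S2b| exact S2c] | exact LS2 | exact S2b]).
  destruct (classic (exists t, b = op t a)) as [[t0 Hb] | nb].
  - left. intros I [[i Ii] [_ Icl]] x. split; [intros; exact Logic.I|]. intros _.
    assert (inSa : forall x, exists t, x = op t a).
    { intro z. destruct (Hcov z) as [H|H]; [apply C1; exact H|].
      destruct (C2 z H) as [t ->]. exists (op t t0). rewrite Hb, As. reflexivity. }
    destruct (inSa i) as [v Hv]. destruct (A2 a v) as [u Hu]. rewrite <- Hv in Hu.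
    destruct (inSa x) as [t ->]. rewrite Hu, As. apply Icl; [exact Logic.I | exact Ii].
  - right.
    assert (E1 : forall z, S1 z <-> exists t, z = op t a).
    { intro z. split; [apply C1|]. intros [t ->].
      destruct (Hcov (op t a)) as [H|H]; [exact H|].
      destruct (C2 _ H) as [t' Ht']. destruct (A2 b t') as [u Hu].
      rewrite <- Ht' in Hu. exfalso. apply nb. exists (op u t). rewrite Hu, As. reflexivity. }
    assert (E2 : forall z, S2 z <-> exists t, z = op t b).
    { intro z. split; [apply C2|]. intros [t ->].
      destruct (Hcov (op t b)) as [H|H]; [|exact H].
      destruct (C1 _ H) as [t' Ht']. destruct (A2 b t) as [u Hu].
      rewrite Ht' in Hu. exfalso. apply nb. exists (op u t'). rewrite Hu, As. reflexivity. }
    split; [|split; [|split]].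
    + intros x [H1 H2]. destruct (C1 x H1) as [t Ht]. destruct (C2 x H2) as [t' Ht'].
      destruct (A2 b t') as [u Hu]. rewrite <- Ht', Ht in Hu.
      apply nb. exists (op u t). rewrite Hu, As. reflexivity.
    + exact (minimal_of T op As A1 A2 S1 a E1).
    + exact (minimal_of T op As A1 A2 S2 b E2).
    + intros L HL. destruct HL as [[[l Ll] HL1] HL2] eqn:HLe.
      destruct (Hcov l) as [H|H].
      * left. exact (minimal_eq T op As A1 A2 S1 L a l E1 HL Ll H).
      * right. exact (minimal_eq T op As A1 A2 S2 L b l E2 HL Ll H).
Qed.
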